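(* Let $G$ be a finite abelian group, $T \subsetneq G$ a non-empty subset, and fix $x \in G$ with $T + x \ne T$. Put $T^{\uparrow} = T + x$, $C^{\uparrow} = T^{\uparrow}\setminus T$, $C^{\downarrow} = T \setminus T^{\uparrow}$ and $A = T \cup T^{\uparrow}$. Let $d \ge 1$ and let $X$ be a hole in $A^d$. Suppose that $C_{i,d} \subset X$ for some $0 \le i \le d$. Then $(X \setminus C_{i,d})^{\dagger}$ is a hole in $A^{d+1}$.
   Context: For integers $1 \le i \le e$, $C_{i,e} = C^{\downarrow}\times\dots\times C^{\uparrow}\times\dots\times C^{\downarrow} \subset A^e$ ($e$ factors, $C^{\uparrow}$ in the $i$-th factor, $C^{\downarrow}$ elsewhere), and $C_{0,e} = (C^{\downarrow})^e$. A copy of $T$ in $G^e$ is a translate $\mathsf{T}_j + y$ ($y\in G^e$, $1\le j\le e$), where $\mathsf{T}_j$ is the set of points of $G^e$ with $j$-th coordinate in $T$ and other coordinates $0$; a set is $T$-tilable if it is a disjoint union of copies of $T$. A set $X \subset A^e$ is a hole in $A^e$ if $A^e \setminus X$ is $T$-tilable. For $X \subset A^e$, define $X^{\dagger} = (X \times C^{\downarrow}) \cup C_{e+1,e+1} \subset A^{e+1}$. *)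

(* Defs.v *)
From mathcomp Require Import all_boot all_order all_algebra.
Set Implicit Arguments. Unset Strict Implicit. Unset Printing Implicit Defensive.
Import GRing.Theory.
Local Open Scope ring_scope.

Section Tiling.
Variable G : finZmodType.
Variables (T : {set G}) (x : G).

Definition pt (e : nat) := {ffun 'I_e -> G}.

Definition Tup : {set G} := [set t + x | t in T].
Definition Cup : {set G} := Tup :\: T.
Definition Cdown : {set G} := T :\: Tup.
Definition Aset : {set G} := T :|: Tup.

Definition Apow (e : nat) : {set pt e} := [set y : pt e | [forall k, y k \in Aset]].

(* C_{i,e}: coordinates are 1-based in the paper; the 0-based ordinal k is the
   (k+1)-th coordinate.  For i = 0 (or no matching k) this is (C^down)^e. *)
Definition Cset (i e : nat) : {set pt e} :=
  [set y : pt e | [forall k : 'I_e,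
     y k \in (if (k.+1 == i)%N then Cup else Cdown)]].

Definition Tj (e : nat) (j : 'I_e) : {set pt e} :=
  [set z : pt e | (z j \in T) && [forall k, (k != j) ==> (z k == 0)]].

Definition translate (e : nat) (z y : pt e) : pt e := [ffun k => z k + y k].

Definition copy (e : nat) (S : {set pt e}) : Prop :=
  exists (j : 'I_e) (y : pt e), S = [set translate z y | z in Tj j].

Definition tilable (e : nat) (S : {set pt e}) : Prop :=
  exists P : {set {set pt e}},
    [/\ forall B, B \in P -> copy B, trivIset P & cover P = S].

Definition hole (e : nat) (X : {set pt e}) : Prop :=
  X \subset Apow e /\ tilable (Apow e :\: X).

(* (y, g) in G^e x G viewed as a point of G^(e+1), g the last coordinate *)
Definition ext (e : nat) (y : pt e) (g : G) : pt e.+1 :=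
  [ffun k : 'I_e.+1 => if unlift ord_max k is Some k' then y k' else g].

Definition dagger (e : nat) (X : {set pt e}) : {set pt e.+1} :=
  [set ext y g | y in X, g in Cdown] :|: Cset e.+1 e.+1.

End Tiling.

(* Main.v *)
Require Import Defs.
From mathcomp Require Import all_boot all_order all_algebra.
Set Implicit Arguments. Unset Strict Implicit. Unset Printing Implicit Defensive.
Import GRing.Theory.
Local Open Scope ring_scope.

Section Aux.
Variables (G : finZmodType) (T : {set G}) (x : G).

Definition fstp e (z : pt G e.+1) : pt G e := [ffun k => z (lift ord_max k)].

Lemma ext_lift e (y : pt G e) g k : ext y g (lift ord_max k) = y k.
Proof. by rewrite ffunE liftK. Qed.

Lemma ext_max e (y : pt G e) g : ext y g ord_max = g.
Proof. by rewrite ffunE unlift_none. Qed.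

Lemma ext_fst e (z : pt G e.+1) : ext (fstp z) (z ord_max) = z.
Proof.
apply/ffunP => k; case: (unliftP ord_max k) => [k' ->|->].
  by rewrite ext_lift ffunE.
by rewrite ext_max.
Qed.

Lemma ext_inj e (y y' : pt G e) g g' : ext y g = ext y' g' -> y = y' /\ g = g'.
Proof.
move=> E; split; last by rewrite -(ext_max y g) E ext_max.
by apply/ffunP => k; rewrite -(ext_lift y g) E ext_lift.
Qed.

Lemma forall_split e (P : pred 'I_e.+1) :
  [forall k, P k] = P ord_max && [forall k, P (lift ord_max k)].
Proof.
apply/forallP/andP => [H|[H1 /forallP H2] k]; first by split => //; apply/forallP.
by case: (unliftP ord_max k) => [k' ->|->].
Qed.

Lemma mem_ApowS e (y : pt G e) g :
  (ext y g \in Apow T x e.+1) = (y \in Apow T x e) && (g \in Aset T x).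
Proof.
rewrite !inE forall_split ext_max andbC; congr (_ && _); last by rewrite !inE.
by apply: eq_forallb => k; rewrite ext_lift.
Qed.

Lemma mem_CsetS i e (y : pt G e) g :
  (ext y g \in Cset T x i e.+1) =
  (y \in Cset T x i e) && (g \in (if (e.+1 == i)%N then Cup T x else Cdown T x)).
Proof.
rewrite !inE forall_split ext_max andbC; congr (_ && _); try (by apply: eq_forallb => k; rewrite ext_lift ?lift_max).
Qed.

Lemma Cset_sub i e (y : pt G e) : y \in Cset T x i e -> y \in Apow T x e.
Proof.
rewrite !inE => /forallP H; apply/forallP => k; move: (H k).
by case: ifP => _; rewrite /Aset /Cup /Cdown !inE => /andP[_ ->]; rewrite ?orbT.
Qed.

Lemma tilable0 e : tilable T (set0 : {set pt G e}).
Proof.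
exists set0; split => [B||]; first by rewrite inE.
  by rewrite /trivIset /cover !big_set0 cards0.
by rewrite /cover big_set0.
Qed.

Lemma tilableU e (S1 S2 : {set pt G e}) :
  tilable T S1 -> tilable T S2 -> [disjoint S1 & S2] -> tilable T (S1 :|: S2).
Proof.
move=> [P1 [c1 t1 e1]] [P2 [c2 t2 e2]] dis; exists (P1 :|: P2); split.
- by move=> B /setUP[]; [apply: c1 | apply: c2].
- by apply: trivIsetU => //; rewrite e1 e2.
- by rewrite /cover bigcup_setU -/(cover P1) -/(cover P2) e1 e2.
Qed.

Lemma tilable_bigcup e (I : finType) (J : {set I}) (F : I -> {set pt G e}) :
  (forall i, i \in J -> tilable T (F i)) ->
  {in J &, forall i j, i != j -> [disjoint F i & F j]} ->
  tilable T (\bigcup_(i in J) F i).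
Proof.
have [n] := ubnP #|J|; elim: n J => // n IH J HJ Ht Hd.
have [->|] := eqVneq J set0; first by rewrite big_set0; apply: tilable0.
case/set0Pn => a Ja; rewrite -(setD1K Ja) bigcup_setU big_set1.
apply: tilableU; first exact: Ht.
- apply: IH.
  + by rewrite (cardsD1 a) Ja add1n ltnS in HJ.
  + by move=> i /setD1P[_]; apply: Ht.
  + by move=> i j /setD1P[_ Ji] /setD1P[_ Jj]; apply: Hd.
- apply: bigcup_disjoint => i /setD1P[ia Ji]; apply: Hd => //.
  by rewrite eq_sym.
Qed.

Lemma tilable_imset e e' (f : pt G e -> pt G e') (S : {set pt G e}) :
  injective f -> (forall B, copy T B -> copy T (f @: B)) ->
  tilable T S -> tilable T (f @: S).
Proof.
move=> injf cf [P [cP tP eP]]; exists [set f @: (B : {set pt G e}) | B in P]; split.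
- by move=> _ /imsetP[B PB ->]; apply: cf; apply: cP.
- by rewrite (imset_trivIset _ injf).
- by rewrite cover_imset -imset_cover eP.
Qed.


Definition lay e (g : G) (y : pt G e) : pt G e.+1 := ext y g.

Lemma copy_layer e (B : {set pt G e}) (g : G) : copy T B -> copy T (lay g @: B).
Proof.
case=> j [y ->]; exists (lift ord_max j), (ext y g).
apply/setP => w; apply/imsetP/imsetP.
- case=> _ /imsetP[z zT ->] ->; exists (ext z 0).
  + move: zT; rewrite !inE => /andP[zj /forallP zk]; rewrite ext_lift zj /=.
    apply/forallP => k; case: (unliftP ord_max k) => [k' ->|->].
      by rewrite ext_lift (inj_eq (@lift_inj _ ord_max)); apply: zk.
    by rewrite ext_max eqxx implybT.
  + apply/ffunP => k; case: (unliftP ord_max k) => [k' ->|->];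
    by rewrite /lay /translate !ffunE ?liftK ?unlift_none /= ?ffunE ?add0r.
- case=> w' hw' ->; exists (translate (fstp w') y).
  + apply: imset_f; move: hw'; rewrite !inE => /andP[wj /forallP wk].
    rewrite ffunE wj /=; apply/forallP => k; rewrite ffunE.
    by move: (wk (lift ord_max k)); rewrite (inj_eq (@lift_inj _ ord_max)).
  + move: hw'; rewrite !inE => /andP[_ /forallP wk].
    have w0 : w' ord_max = 0.
      by apply/eqP; move: (wk ord_max); rewrite neq_lift.
    apply/ffunP => k; case: (unliftP ord_max k) => [k' ->|->];
    by rewrite /lay /translate !ffunE ?liftK ?unlift_none /= ?ffunE ?w0 ?add0r.
Qed.

Lemma copy_vert e (y : pt G e) c : copy T (ext y @: [set t + c | t in T]).
Proof.
exists ord_max, (ext y c).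
apply/setP => w; apply/imsetP/imsetP.
- case=> _ /imsetP[t tT ->] ->; exists (ext [ffun=> 0] t).
  + rewrite !inE ext_max tT /=; apply/forallP => k.
    case: (unliftP ord_max k) => [k' ->|->]; last by rewrite eqxx.
    by rewrite ext_lift ffunE eqxx implybT.
  + apply/ffunP => k; case: (unliftP ord_max k) => [k' ->|->];
    by rewrite /lay /translate !ffunE ?liftK ?unlift_none /= ?ffunE ?add0r.
- case=> w' hw' ->; exists (w' ord_max + c).
  + by apply: imset_f; move: hw'; rewrite !inE => /andP[].
  + move: hw'; rewrite !inE => /andP[_ /forallP wk].
    apply/ffunP => k; case: (unliftP ord_max k) => [k' ->|->];
    rewrite /translate !ffunE ?liftK ?unlift_none //=.
    by move: (wk (lift ord_max k')); rewrite eq_sym neq_lift => /eqP ->; rewrite add0r.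
Qed.

Lemma tilable_layers e (Q : {set pt G e}) (R : {set G}) :
  tilable T Q -> tilable T (\bigcup_(g in R) (lay g @: Q)).
Proof.
move=> tQ; apply: tilable_bigcup => [g _|g g' _ _ ngg'].
  apply: tilable_imset => //; last by move=> B; apply: copy_layer.
  by move=> y y' /ext_inj[].
rewrite -setI_eq0; apply/eqP/setP => w; rewrite !inE.
apply/andP => -[/imsetP[y _ ->] /imsetP[y' _ /ext_inj[_ E]]].
by rewrite E eqxx in ngg'.
Qed.

Lemma tilable_verts e (Q : {set pt G e}) c :
  tilable T (\bigcup_(y in Q) (ext y @: [set t + c | t in T])).
Proof.
apply: tilable_bigcup => [y _|y y' _ _ nyy'].
  exists [set ext y @: [set t + c | t in T]]; split.
  - by move=> B; rewrite inE => /eqP ->; apply: copy_vert.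
  - exact: trivIset1.
  - exact: cover1.
rewrite -setI_eq0; apply/eqP/setP => w; rewrite !inE.
apply/andP => -[/imsetP[g _ ->] /imsetP[g' _ /ext_inj[E _]]].
by rewrite E eqxx in nyy'.
Qed.

Lemma mem_layers e (Q : {set pt G e}) (R : {set G}) (y : pt G e) (g : G) :
  (ext y g \in \bigcup_(g' in R) (lay g' @: Q)) = (g \in R) && (y \in Q).
Proof.
apply/bigcupP/andP => [[g' Rg' /imsetP[y' Qy' /ext_inj[-> ->]]]|[Rg Qy]] //.
by exists g => //; apply: imset_f.
Qed.

Lemma mem_verts e (Q : {set pt G e}) (R : {set G}) (y : pt G e) (g : G) :
  (ext y g \in \bigcup_(y' in Q) (ext y' @: R)) = (y \in Q) && (g \in R).
Proof.
apply/bigcupP/andP => [[y' Qy' /imsetP[g' Rg' /ext_inj[-> ->]]]|[Qy Rg]] //.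
by exists y => //; apply: imset_f.
Qed.


Lemma T0 : [set t + 0 | t in T] = T.
Proof.
apply/setP => g; apply/imsetP/idP => [[t tT ->]|gT]; first by rewrite addr0.
by exists g; rewrite ?addr0.
Qed.

Lemma ACup : Aset T x :\: Cup T x = [set t + 0 | t in T].
Proof.
rewrite T0; apply/setP => g; rewrite /Aset /Cup !in_setD !in_setU.
by case: (g \in T); case: (g \in Tup T x).
Qed.

Lemma ACdown : Aset T x :\: Cdown T x = [set t + x | t in T].
Proof.
rewrite -/(Tup T x); apply/setP => g; rewrite /Aset /Cdown !in_setD !in_setU.
by case: (g \in T); case: (g \in Tup T x).
Qed.

Lemma tilable_ACset j e : tilable T (Apow T x e :\: Cset T x j e).
Proof.
elim: e => [|e IH].
  suff -> : Apow T x 0 :\: Cset T x j 0 = set0 by apply: tilable0.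
  apply/setP => z; rewrite in_setD in_set0; apply/negbTE.
  by rewrite negb_and negbK inE; apply/orP; left; apply/forallP => -[].
pose S := if (e.+1 == j)%N then Cup T x else Cdown T x.
have [c hc] : exists c, Aset T x :\: S = [set t + c | t in T].
  by rewrite /S; case: ifP => _; [exists 0; exact: ACup | exists x; exact: ACdown].
suff -> : Apow T x e.+1 :\: Cset T x j e.+1 =
   (\bigcup_(g in Aset T x) (lay g @: (Apow T x e :\: Cset T x j e))) :|:
   \bigcup_(y in Cset T x j e) (ext y @: [set t + c | t in T]).
  apply: tilableU; [exact: tilable_layers | exact: tilable_verts | ].
  rewrite -setI_eq0; apply/eqP/setP => w.
  rewrite -(ext_fst w) in_setI mem_layers mem_verts -hc !in_setD in_set0.
  by case: (fstp w \in Cset T x j e) => /=; rewrite ?andbF.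
apply/setP => w.
rewrite -(ext_fst w) in_setU mem_layers mem_verts -hc !in_setD mem_ApowS mem_CsetS -/S.
move: (@Cset_sub j e (fstp w)).
case: (fstp w \in Cset T x j e); case: (fstp w \in Apow T x e);
case: (w ord_max \in S); case: (w ord_max \in Aset T x) => //= H.
by have := H isT.
Qed.

Lemma mem_dag e (Q : {set pt G e}) (R : {set G}) (y : pt G e) (g : G) :
  (ext y g \in [set ext y' g' | y' in Q, g' in R]) = (y \in Q) && (g \in R).
Proof.
apply/imset2P/andP => [[y' g' Qy' Rg' /ext_inj[-> ->]]|[Qy Rg]] //.
by exists y g.
Qed.

End Aux.

Theorem proposition11 (G : finZmodType) (T : {set G}) (x : G)
  (hT0 : T != set0) (hTG : T \proper [set: G]) (hx : Tup T x != T)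
  (d : nat) (hd : (1 <= d)%N) (X : {set pt G d})
  (hX : hole T x X) (i : nat) (hi : (i <= d)%N)
  (hC : Cset T x i d \subset X) :
  hole T x (dagger T x (X :\: Cset T x i d)).
Proof.
case: hX => XA tY.
set C := Cset T x i d.
have key : forall w : pt G d.+1,
   [&& (fstp w \in C) ==> (fstp w \in X), (fstp w \in X) ==> (fstp w \in Apow T x d)
     & (fstp w \in Cset T x d.+1 d) ==> (fstp w \in Apow T x d)].
  move=> w; apply/and3P; split; apply/implyP.
  - exact: (subsetP hC).
  - exact: (subsetP XA).
  - exact: Cset_sub.
split.
  apply/subsetP => w; have K := key w.
  rewrite -(ext_fst w) /dagger in_setU mem_dag mem_CsetS eqxx mem_ApowS.
  rewrite /Cup /Cdown /Aset !in_setD !in_setU; move: K.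
  case: (fstp w \in C); case: (fstp w \in X); case: (fstp w \in Apow T x d);
  case: (fstp w \in Cset T x d.+1 d); case: (w ord_max \in T);
  by case: (w ord_max \in Tup T x).
pose L1 := \bigcup_(g in Cdown T x) (lay g @: (Apow T x d :\: X)).
pose V := \bigcup_(y in C) (ext y @: [set t + 0 | t in T]).
pose L2 := \bigcup_(g in T :&: Tup T x) (lay g @: (Apow T x d :\: C)).
pose L3 := \bigcup_(g in Cup T x) (lay g @: (Apow T x d :\: Cset T x d.+1 d)).
have E : forall w, ((w \in L1) + (w \in V) + (w \in L2) + (w \in L3) <= 1)%N /\
   (w \in Apow T x d.+1 :\: dagger T x (X :\: C)) =
   [|| w \in L1, w \in V, w \in L2 | w \in L3].
  move=> w; have K := key w.
  rewrite /L1 /V /L2 /L3 -(ext_fst w) !mem_layers mem_verts T0 /dagger.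
  rewrite !in_setD !in_setU mem_dag mem_CsetS eqxx mem_ApowS.
  rewrite /Cup /Cdown /Aset !in_setD !in_setU !in_setI; move: K.
  case: (fstp w \in C); case: (fstp w \in X); case: (fstp w \in Apow T x d);
  case: (fstp w \in Cset T x d.+1 d); case: (w ord_max \in T);
  by case: (w ord_max \in Tup T x).
have -> : Apow T x d.+1 :\: dagger T x (X :\: C) = L1 :|: (V :|: (L2 :|: L3)).
  by apply/setP => w; rewrite !in_setU (proj2 (E w)) !orbA.
have dis : forall A B : {set pt G d.+1},
    (forall w, ((w \in A) + (w \in B) <= 1)%N) -> [disjoint A & B].
  move=> A B H; rewrite -setI_eq0; apply/eqP/setP => w; rewrite in_setI in_set0.
  by move: (H w); case: (w \in A); case: (w \in B).
apply: tilableU; [exact: tilable_layers | | ].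
  apply: tilableU; [exact: tilable_verts | | ].
    apply: tilableU; [apply: tilable_layers; exact: tilable_ACset
                     | apply: tilable_layers; exact: tilable_ACset | ].
    apply: dis => w; move: (proj1 (E w)).
    by case: (w \in L1); case: (w \in V); case: (w \in L2); case: (w \in L3).
  apply: dis => w; rewrite in_setU; move: (proj1 (E w)).
  by case: (w \in L1); case: (w \in V); case: (w \in L2); case: (w \in L3).
apply: dis => w; rewrite !in_setU; move: (proj1 (E w)).
by case: (w \in L1); case: (w \in V); case: (w \in L2); case: (w \in L3).
Qed.
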